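(* Let $k\in\mathbb{N}$, $n>2k$, $q>k$ and $\lambda_0>0$. Assume there exists a classical solution $w$ of \[ c_{n,k}r^{1-n}\big(r^{n-k}(w')^k\big)'=\lambda_0(1-w)^q\ (0<r<1),\quad w<0\ (0<r<1),\quad w'(0)=0,\ w(1)=0. \] Then for every $\lambda\in(0,\lambda_0)$ problem $(P_\lambda)$ has a maximal bounded solution $u_\lambda$. Moreover, the maximal solutions are decreasing in $\lambda$: if $0<\lambda_1<\lambda_2<\lambda_0$, then $u_{\lambda_2}\le u_{\lambda_1}$.
   Context: $c_{n,k}=\binom{n}{k}/n$. Problem $(P_\lambda)$ ($\lambda>0$) is $c_{n,k}r^{1-n}(r^{n-k}(u')^k)'=\lambda(1-u)^q$ on $(0,1)$, $u<0$ on $(0,1)$, $u'(0)=0$, $u(1)=0$. A classical solution is a function in $\Phi_0^k=\{u\in C^2((0,1))\cap C^1([0,1]): (r^{n-i}(u')^i)'\ge0 \text{ on }(0,1),\ i=1,\dots,k,\ u'(0)=u(1)=0\}$ satisfying the equation. A subsolution is $u\in C^2((0,1))\cap C^1([0,1])$ with $(r^{n-i}(u')^i)'\ge0$ for $i=1,\dots,k$, $c_{n,k}r^{1-n}(r^{n-k}(u')^k)'\ge\lambda(1-u)^q$ and $u(1)\le0$. A maximal solution is a solution $v$ with $u\le v$ for every subsolution $u$. *)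

(* Defs.v *)
From Stdlib Require Import Reals Lra.
Open Scope R_scope.

Definition Ioo (r : R) : Prop := 0 < r < 1.
Definition Icc (r : R) : Prop := 0 <= r <= 1.

Definition deriv_within (D : R -> Prop) (f : R -> R) (x l : R) : Prop :=
  forall eps, 0 < eps -> exists delta, 0 < delta /\
    forall y, D y -> y <> x -> Rabs (y - x) < delta ->
      Rabs ((f y - f x) / (y - x) - l) < eps.

Definition cont_within (D : R -> Prop) (f : R -> R) (x : R) : Prop :=
  forall eps, 0 < eps -> exists delta, 0 < delta /\
    forall y, D y -> Rabs (y - x) < delta -> Rabs (f y - f x) < eps.

(* u ∈ C^2((0,1)) ∩ C^1([0,1]) with u1 its derivative on [0,1]. *)
Definition C2_C1 (u u1 : R -> R) : Prop :=
  (forall r, Icc r -> deriv_within Icc u r (u1 r) /\ cont_within Icc u1 r) /\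
  exists u2 : R -> R, forall r, Ioo r ->
    derivable_pt_lim u1 r (u2 r) /\ continuity_pt u2 r.

Definition admissible (n k : nat) (u1 : R -> R) : Prop :=
  forall i : nat, (1 <= i <= k)%nat -> forall r, Ioo r ->
    exists d, derivable_pt_lim (fun s => s ^ (n - i) * (u1 s) ^ i) r d /\ 0 <= d.

Definition cnk (n k : nat) : R := C n k / INR n.

Definition is_solution (n k : nat) (q lam : R) (u : R -> R) : Prop :=
  exists u1 : R -> R,
    C2_C1 u u1 /\ admissible n k u1 /\ u1 0 = 0 /\ u 1 = 0 /\
    (forall r, Ioo r -> u r < 0) /\
    (forall r, Ioo r -> exists d,
       derivable_pt_lim (fun s => s ^ (n - k) * (u1 s) ^ k) r d /\
       cnk n k * d / r ^ (n - 1) = lam * Rpower (1 - u r) q).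

Definition is_subsolution (n k : nat) (q lam : R) (u : R -> R) : Prop :=
  exists u1 : R -> R,
    C2_C1 u u1 /\ admissible n k u1 /\ u 1 <= 0 /\
    (forall r, Ioo r -> exists d,
       derivable_pt_lim (fun s => s ^ (n - k) * (u1 s) ^ k) r d /\
       cnk n k * d / r ^ (n - 1) >= lam * Rpower (1 - u r) q).

Definition is_maximal (n k : nat) (q lam : R) (u : R -> R) : Prop :=
  is_solution n k q lam u /\
  forall v, is_subsolution n k q lam v -> forall r, Icc r -> v r <= u r.

Definition bounded01 (u : R -> R) : Prop :=
  exists M, forall r, Icc r -> Rabs (u r) <= M.

(* Main.v *)
Require Import Defs.
From Stdlib Require Import Reals Lra.
From Stdlib Require Import Lia ClassicalEpsilon.
From Coquelicot Require Import Coquelicot.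
Open Scope R_scope.

Lemma cont_pt_intro (f : R -> R) (x : R) :
  (forall eps, 0 < eps -> exists d, 0 < d /\ forall y, Rabs (y - x) < d -> Rabs (f y - f x) < eps) ->
  continuity_pt f x.
Proof.
  intros H. unfold continuity_pt, continue_in, limit1_in, limit_in. simpl. unfold R_dist.
  intros eps He. destruct (H eps He) as [d [Hd Hy]]. exists d. split; auto.
  intros y [_ Hy']. auto.
Qed.

Lemma cont_pt_elim (f : R -> R) (x : R) : continuity_pt f x ->
  forall eps, 0 < eps -> exists d, 0 < d /\ forall y, Rabs (y - x) < d -> Rabs (f y - f x) < eps.
Proof.
  unfold continuity_pt, continue_in, limit1_in, limit_in. simpl. unfold R_dist.
  intros H eps He. destruct (H eps He) as [d [Hd Hy]]. exists d. split; auto.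
  intros y Hyx. destruct (Req_dec y x) as [->|Hne].
  - rewrite Rminus_eq_0, Rabs_R0; auto.
  - apply Hy. split; auto. unfold D_x, no_cond. split; auto.
Qed.

Lemma deriv_cont_pt f x l : derivable_pt_lim f x l -> continuity_pt f x.
Proof. intros H. apply derivable_continuous_pt. exists l. exact H. Qed.

Definition clamp (x : R) : R := Rmax 0 (Rmin 1 x).

Lemma clamp_Icc x : Icc x -> clamp x = x.
Proof. unfold Icc, clamp; intros [H1 H2].
  rewrite Rmin_right by lra. rewrite Rmax_right by lra. reflexivity. Qed.

Lemma clamp_in x : Icc (clamp x).
Proof. unfold Icc, clamp. split.
  - apply Rmax_l.
  - apply Rmax_lub; [lra| apply Rmin_l]. Qed.

Lemma clamp_lip x y : Rabs (clamp x - clamp y) <= Rabs (x - y).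
Proof. unfold clamp, Rmax, Rmin.
  repeat (destruct Rle_dec); repeat (destruct Rle_dec); unfold Rabs;
  repeat destruct Rcase_abs; lra. Qed.

Lemma clamp_cont x : continuity_pt clamp x.
Proof. apply cont_pt_intro. intros eps He. exists eps. split; auto.
  intros y Hy. eapply Rle_lt_trans. apply clamp_lip. auto. Qed.

Lemma clamp_idem x : clamp (clamp x) = clamp x.
Proof. apply clamp_Icc, clamp_in. Qed.

Lemma cont_clamp_comp f x : continuity_pt f (clamp x) -> continuity_pt (fun t => f (clamp t)) x.
Proof. intros H. apply (continuity_pt_comp clamp f). apply clamp_cont. exact H. Qed.

Lemma deriv_within_cont D f x l : deriv_within D f x l -> cont_within D f x.
Proof.
  intros H eps He. destruct (H 1 Rlt_0_1) as [d [Hd Hy]].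
  exists (Rmin d (eps / (Rabs l + 1))). split.
  { apply Rmin_pos; auto. apply Rdiv_lt_0_compat; auto. pose proof (Rabs_pos l); lra. }
  intros y Dy Hyx. destruct (Req_dec y x) as [->|Hne].
  { rewrite Rminus_eq_0, Rabs_R0; auto. }
  assert (Hyx1 : Rabs (y - x) < d) by (eapply Rlt_le_trans; [exact Hyx| apply Rmin_l]).
  assert (Hyx2 : Rabs (y - x) < eps / (Rabs l + 1)) by (eapply Rlt_le_trans; [exact Hyx| apply Rmin_r]).
  specialize (Hy y Dy Hne Hyx1).
  assert (Hn : y - x <> 0) by lra.
  assert (E : f y - f x = ((f y - f x) / (y - x)) * (y - x)) by (field; auto).
  rewrite E, Rabs_mult.
  assert (Rabs ((f y - f x) / (y - x)) <= Rabs l + 1).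
  { replace ((f y - f x) / (y - x)) with (((f y - f x) / (y - x) - l) + l) by ring.
    eapply Rle_trans. apply Rabs_triang. lra. }
  pose proof (Rabs_pos l). pose proof (Rabs_pos (y - x)).
  apply Rle_lt_trans with ((Rabs l + 1) * Rabs (y - x)).
  { apply Rmult_le_compat_r; auto. }
  apply Rmult_lt_reg_l with (/ (Rabs l + 1)). apply Rinv_0_lt_compat; lra.
  rewrite <- Rmult_assoc, Rinv_l by lra. rewrite Rmult_1_l.
  unfold Rdiv in Hyx2. lra.
Qed.

Lemma cont_within_clamp f :
  (forall x, Icc x -> cont_within Icc f x) -> forall x, continuity_pt (fun t => f (clamp t)) x.
Proof.
  intros H x. apply cont_pt_intro. intros eps He.
  destruct (H (clamp x) (clamp_in x) eps He) as [d [Hd Hy]].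
  exists d. split; auto. intros y Hyx. apply Hy. apply clamp_in.
  eapply Rle_lt_trans. apply clamp_lip. auto.
Qed.

Lemma deriv_within_interior f x l : Ioo x -> deriv_within Icc f x l -> derivable_pt_lim f x l.
Proof.
  intros Hx H eps He. destruct (H eps He) as [d [Hd Hy]]. unfold Ioo in Hx.
  assert (Hp : 0 < Rmin d (Rmin x (1 - x))) by (repeat apply Rmin_pos; lra).
  exists (mkposreal _ Hp). simpl. intros h Hh0 Hh.
  assert (h1 : Rabs h < d) by (eapply Rlt_le_trans; [exact Hh|apply Rmin_l]).
  assert (h2 : Rabs h < Rmin x (1-x)) by (eapply Rlt_le_trans; [exact Hh|apply Rmin_r]).
  assert (h3 : Rabs h < x) by (eapply Rlt_le_trans; [exact h2|apply Rmin_l]).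
  assert (h4 : Rabs h < 1 - x) by (eapply Rlt_le_trans; [exact h2|apply Rmin_r]).
  assert (HI : Icc (x + h)).
  { unfold Icc. revert h3 h4. unfold Rabs. destruct Rcase_abs; lra. }
  specialize (Hy (x + h) HI). replace (x + h - x) with h in Hy by ring. apply Hy; auto. lra.
Qed.

Lemma deriv_local f g x l d : 0 < d -> (forall y, Rabs (y - x) < d -> g y = f y) ->
  derivable_pt_lim f x l -> derivable_pt_lim g x l.
Proof.
  intros Hd Heq H eps He. destruct (H eps He) as [d' Hd'].
  assert (Hp : 0 < Rmin d d') by (apply Rmin_pos; auto; apply cond_pos).
  exists (mkposreal _ Hp). simpl. intros h Hh0 Hh.
  rewrite (Heq (x + h)), (Heq x).
  - apply Hd'; auto. eapply Rlt_le_trans; [exact Hh|apply Rmin_r].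
  - rewrite Rminus_eq_0, Rabs_R0; auto.
  - replace (x + h - x) with h by ring. eapply Rlt_le_trans; [exact Hh|apply Rmin_l].
Qed.

Lemma deriv_clamp f x l : Ioo x -> derivable_pt_lim f x l -> derivable_pt_lim (fun t => f (clamp t)) x l.
Proof.
  intros Hx H. unfold Ioo in Hx. apply deriv_local with f (Rmin x (1-x)); auto.
  apply Rmin_pos; lra.
  intros y Hy. f_equal. apply clamp_Icc.
  assert (h3 : Rabs (y-x) < x) by (eapply Rlt_le_trans; [exact Hy|apply Rmin_l]).
  assert (h4 : Rabs (y-x) < 1 - x) by (eapply Rlt_le_trans; [exact Hy|apply Rmin_r]).
  unfold Icc. revert h3 h4. unfold Rabs. destruct Rcase_abs; lra.
Qed.

Lemma mono_01 f a b : 0 <= a -> a < b -> b <= 1 ->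
  (forall x, a < x < b -> exists d, derivable_pt_lim f x d /\ 0 <= d) ->
  continuity_pt (fun t => f (clamp t)) a -> continuity_pt (fun t => f (clamp t)) b ->
  f a <= f b.
Proof.
  intros Ha Hab Hb Hd Ca Cb.
  set (g := fun t => f (clamp t)).
  assert (Hdf : forall x, a < x < b -> { d | derivable_pt_lim g x d /\ 0 <= d }).
  { intros x Hx. apply constructive_indefinite_description.
    destruct (Hd x Hx) as [d [H1 H2]]. exists d. split; auto.
    apply deriv_clamp; auto. unfold Ioo; lra. }
  set (df := fun x => match Rlt_dec a x with
      | left h1 => match Rlt_dec x b with
         | left h2 => proj1_sig (Hdf x (conj h1 h2)) | right _ => 0 end | right _ => 0 end).
  assert (Hdfx : forall x, a < x < b -> derivable_pt_lim g x (df x) /\ 0 <= df x).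
  { intros x Hx. unfold df. destruct (Rlt_dec a x); [|lra]. destruct (Rlt_dec x b); [|lra].
    apply (proj2_sig (Hdf x (conj r r0))). }
  destruct (MVT_gen g a b df) as [c [Hc Heq]].
  - intros x Hx. rewrite Rmin_left, Rmax_right in Hx by lra. apply is_derive_Reals. apply Hdfx; auto.
  - intros x Hx. rewrite Rmin_left, Rmax_right in Hx by lra.
    destruct (Req_dec x a) as [->|]; auto. destruct (Req_dec x b) as [->|]; auto.
    apply deriv_cont_pt with (df x). apply Hdfx; lra.
  - unfold g in Heq. rewrite !clamp_Icc in Heq by (unfold Icc; lra).
    rewrite Rmin_left, Rmax_right in Hc by lra.
    destruct (Req_dec c a) as [->|]. 
    + assert (df a = 0) by (unfold df; destruct (Rlt_dec a a) as [hh|]; [destruct (Rlt_irrefl _ hh)|reflexivity]). rewrite H in Heq. lra.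
    + destruct (Req_dec c b) as [->|].
      * assert (df b = 0) by (unfold df; destruct (Rlt_dec a b); [destruct (Rlt_dec b b) as [hh|]; [destruct (Rlt_irrefl _ hh)|reflexivity]|reflexivity]). rewrite H0 in Heq. lra.
      * destruct (Hdfx c) as [_ Hp]. lra. nra.
Qed.


Lemma cont_local f g x d : 0 < d -> (forall y, Rabs (y - x) < d -> g y = f y) ->
  continuity_pt f x -> continuity_pt g x.
Proof.
  intros Hd Heq H. apply cont_pt_intro. intros eps He.
  destruct (cont_pt_elim f x H eps He) as [d' [Hd' Hy]].
  exists (Rmin d d'). split. apply Rmin_pos; auto.
  intros y Hyx. rewrite (Heq y), (Heq x).
  - apply Hy. eapply Rlt_le_trans; [exact Hyx|apply Rmin_r].
  - rewrite Rminus_eq_0, Rabs_R0; auto.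
  - eapply Rlt_le_trans; [exact Hyx|apply Rmin_l].
Qed.

Lemma Rpower_pos x y : 0 < Rpower x y.
Proof. unfold Rpower. apply exp_pos. Qed.

Lemma Rpower_ge1 x y : 1 <= x -> 0 <= y -> 1 <= Rpower x y.
Proof. intros Hx Hy. rewrite <- (Rpower_O x) by lra. apply Rle_Rpower; auto. Qed.

Lemma Rpower_cont_base x y : 0 < x -> continuity_pt (fun z => Rpower z y) x.
Proof. intros Hx. eapply deriv_cont_pt. apply derivable_pt_lim_power; auto. Qed.

Lemma cont_to_continuous f x : continuity_pt f x -> continuous f x.
Proof. intros H. apply continuity_pt_filterlim; auto. Qed.

Lemma Rpower_pow_inv x m : (1 <= m)%nat -> 0 < x -> Rpower x (/ INR m) ^ m = x.
Proof.
  intros Hm Hx. rewrite <- Rpower_pow by apply Rpower_pos.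
  rewrite Rpower_mult, Rinv_l. apply Rpower_1; auto.
  apply not_0_INR. lia.
Qed.

Lemma Rpower_inv_pow x m : (1 <= m)%nat -> 0 < x -> Rpower (x ^ m) (/ INR m) = x.
Proof.
  intros Hm Hx. rewrite <- Rpower_pow by auto.
  rewrite Rpower_mult, Rinv_r. apply Rpower_1; auto.
  apply not_0_INR. lia.
Qed.

Lemma pow_inj_le x y m : (1 <= m)%nat -> 0 <= x -> 0 <= y -> y ^ m <= x ^ m -> y <= x.
Proof.
  intros Hm Hx Hy H. destruct (Rle_lt_dec y x); auto.
  exfalso. assert (x ^ m < y ^ m).
  { destruct m. lia. simpl. 
    assert (x ^ m <= y ^ m) by (apply pow_incr; lra).
    assert (0 <= x ^ m) by (apply pow_le; auto).
    destruct (Req_dec x 0) as [->|].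
    - rewrite Rmult_0_l. apply Rmult_lt_0_compat. lra. apply pow_lt. lra.
    - apply Rle_lt_trans with (x * y ^ m). apply Rmult_le_compat_l; lra.
      apply Rmult_lt_compat_r. apply pow_lt; lra. lra. }
  lra.
Qed.

Lemma Rmax_diff a b c d : Rabs (Rmax a b - Rmax c d) <= Rmax (Rabs (a - c)) (Rabs (b - d)).
Proof. unfold Rmax, Rabs. repeat (destruct Rcase_abs || destruct Rle_dec); lra. Qed.

Lemma cont_Rmax f g x : continuity_pt f x -> continuity_pt g x -> continuity_pt (fun t => Rmax (f t) (g t)) x.
Proof.
  intros Hf Hg. apply cont_pt_intro. intros eps He.
  destruct (cont_pt_elim f x Hf eps He) as [d1 [Hd1 H1]].
  destruct (cont_pt_elim g x Hg eps He) as [d2 [Hd2 H2]].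
  exists (Rmin d1 d2). split. apply Rmin_pos; auto.
  intros y Hy. eapply Rle_lt_trans. apply Rmax_diff. apply Rmax_lub_lt.
  apply H1. eapply Rlt_le_trans; [exact Hy|apply Rmin_l].
  apply H2. eapply Rlt_le_trans; [exact Hy|apply Rmin_r].
Qed.

Section Op.
Variables (n k : nat) (q : R).
Hypothesis hk : (1 <= k)%nat.
Hypothesis hn : (2 * k < n)%nat.
Hypothesis hq : INR k < q.

Lemma q_pos : 0 < q.
Proof. pose proof (pos_INR k). lra. Qed.

Definition Fq (u : R -> R) (t : R) := t ^ (n - 1) * Rpower (1 - u (clamp t)) q.
Definition Gq c u s := c * RInt (Fq u) 0 s.
Definition phi c u s := if Rle_dec s 0 then 0 else Rpower (Gq c u s / s ^ (n - k)) (/ INR k).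
Definition Tq c u r := - RInt (phi c u) r 1.

Definition Good (u : R -> R) := (forall x, continuity_pt (fun t => u (clamp t)) x) /\ (forall x, Icc x -> u x <= 0).

Lemma base_ge1 u t : Good u -> 1 <= 1 - u (clamp t).
Proof. intros [_ H]. specialize (H _ (clamp_in t)). lra. Qed.

Lemma Pq_cont u t : Good u -> continuity_pt (fun t => Rpower (1 - u (clamp t)) q) t.
Proof.
  intros Hu. apply (continuity_pt_comp (fun t => 1 - u (clamp t)) (fun z => Rpower z q)).
  - apply (continuity_pt_minus (fun _ => 1) (fun t => u (clamp t))).
    apply continuity_pt_const. intros a b; reflexivity. apply Hu.
  - apply Rpower_cont_base. pose proof (base_ge1 u t Hu). lra.
Qed.

Lemma F_cont u t : Good u -> continuity_pt (Fq u) t.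
Proof.
  intros Hu. apply (continuity_pt_mult (fun t => t ^ (n - 1)) (fun t => Rpower (1 - u (clamp t)) q)).
  - apply derivable_continuous_pt. apply derivable_pt_pow.
  - apply Pq_cont; auto.
Qed.

Lemma F_exRInt u a b : Good u -> ex_RInt (Fq u) a b.
Proof. intros Hu. apply (ex_RInt_continuous (V:=R_CompleteNormedModule)). intros z _. apply cont_to_continuous, F_cont; auto. Qed.

Lemma G_deriv c u s : Good u -> derivable_pt_lim (Gq c u) s (c * Fq u s).
Proof.
  intros Hu. apply (derivable_pt_lim_scal (fun s => RInt (Fq u) 0 s)).
  apply is_derive_Reals. apply (is_derive_RInt (Fq u) (RInt (Fq u) 0) 0 s).
  - apply filter_forall. intros b. apply (RInt_correct (V:=R_CompleteNormedModule)). apply F_exRInt; auto.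
  - apply cont_to_continuous, F_cont; auto.
Qed.

Lemma G_cont c u s : Good u -> continuity_pt (Gq c u) s.
Proof. intros Hu. eapply deriv_cont_pt. apply G_deriv; auto. Qed.

Lemma G_0 c u : Gq c u 0 = 0.
Proof. unfold Gq. rewrite RInt_point. unfold zero; simpl. ring. Qed.

Lemma F_pos u t : 0 < t -> 0 < Fq u t.
Proof. intros Ht. unfold Fq. apply Rmult_lt_0_compat. apply pow_lt; auto. apply Rpower_pos. Qed.

Lemma G_pos c u s : 0 < c -> Good u -> 0 < s -> 0 < Gq c u s.
Proof.
  intros Hc Hu Hs. unfold Gq. apply Rmult_lt_0_compat; auto.
  apply RInt_gt_0; auto. intros x Hx. apply F_pos. lra.
  intros x _. apply cont_to_continuous, F_cont; auto.
Qed.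

Lemma G_ge0 c u s : 0 <= c -> Good u -> 0 <= s -> 0 <= Gq c u s.
Proof.
  intros Hc Hu Hs. unfold Gq. apply Rmult_le_pos; auto.
  apply RInt_ge_0; auto. apply F_exRInt; auto. intros x Hx. left. apply F_pos. lra.
Qed.

Lemma G_ub c u : 0 <= c -> Good u -> exists M, 0 < M /\ forall s, 0 < s <= 1 -> Gq c u s <= M * s ^ n.
Proof.
  intros Hc Hu.
  destruct (continuity_ab_maj (fun t => Rpower (1 - u (clamp t)) q) 0 1) as [Mx [HM _]].
  lra. intros t _. apply Pq_cont; auto.
  set (P := Rpower (1 - u (clamp Mx)) q) in *.
  assert (HP : 0 < P) by apply Rpower_pos.
  exists (c * P + 1). split. pose proof (Rmult_le_pos c P Hc (Rlt_le _ _ HP)). lra.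
  intros s Hs.
  assert (HI : Rabs (RInt (Fq u) 0 s) <= (s - 0) * (s ^ (n - 1) * P)).
  { apply abs_RInt_le_const. lra. apply F_exRInt; auto.
    intros t Ht. unfold Fq. rewrite Rabs_mult. rewrite Rabs_pos_eq by (apply pow_le; lra).
    rewrite Rabs_pos_eq by (left; apply Rpower_pos).
    apply Rmult_le_compat. apply pow_le; lra. left; apply Rpower_pos.
    apply pow_incr; lra. apply HM; lra. }
  assert (Hsn : s * s ^ (n - 1) = s ^ n).
  { replace (s ^ n) with (s ^ S (n - 1)) by (f_equal; lia). simpl. ring. }
  unfold Gq.
  apply Rle_trans with (c * Rabs (RInt (Fq u) 0 s)).
  { apply Rmult_le_compat_l; auto. apply Rle_abs. }
  apply Rle_trans with (c * ((s - 0) * (s ^ (n - 1) * P))).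
  { apply Rmult_le_compat_l; auto. }
  assert (0 <= s ^ n) by (apply pow_le; lra).
  replace (c * ((s - 0) * (s ^ (n - 1) * P))) with (c * P * (s * s ^ (n - 1))) by ring.
  rewrite Hsn. nra.
Qed.

Lemma Rpower_small x eps : 0 < eps -> 0 < x < eps ^ k -> Rpower x (/ INR k) < eps.
Proof.
  intros He Hx. apply Rlt_le_trans with (Rpower (eps ^ k) (/ INR k)).
  2: { rewrite (Rpower_inv_pow eps k hk He). lra. }
  apply Rlt_Rpower_l; auto. apply Rinv_0_lt_compat. apply lt_0_INR. lia.
Qed.

Definition Qf c u s := Gq c u s / s ^ (n - k).

Lemma phi_pos_eq c u s : 0 < s -> phi c u s = Rpower (Qf c u s) (/ INR k).
Proof. intros Hs. unfold phi, Qf. destruct Rle_dec; [lra|reflexivity]. Qed.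

Lemma Q_pos c u s : 0 < c -> Good u -> 0 < s -> 0 < Qf c u s.
Proof. intros. unfold Qf. apply Rdiv_lt_0_compat. apply G_pos; auto. apply pow_lt; auto. Qed.

Lemma Q_cont c u s : Good u -> 0 < s -> continuity_pt (Qf c u) s.
Proof.
  intros Hu Hs. apply (continuity_pt_div (Gq c u) (fun s => s ^ (n - k))).
  apply G_cont; auto. apply derivable_continuous_pt, derivable_pt_pow.
  apply pow_nonzero; lra.
Qed.

Lemma phi_cont c u s : 0 < c -> Good u -> continuity_pt (phi c u) s.
Proof.
  intros Hc Hu. destruct (Rtotal_order s 0) as [Hs|[Hs|Hs]].
  - apply cont_local with (fun _ => 0) (- s). lra.
    intros y Hy. unfold phi. destruct Rle_dec; auto. exfalso. revert Hy n0. unfold Rabs; destruct Rcase_abs; lra.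
    apply continuity_pt_const. intros a b; reflexivity.
  - subst s. apply cont_pt_intro. intros eps He.
    destruct (G_ub c u (Rlt_le _ _ Hc) Hu) as [M [HM HG]].
    assert (Hek : 0 < eps ^ k) by (apply pow_lt; auto).
    exists (Rmin 1 (eps ^ k / M)). split. apply Rmin_pos. lra. apply Rdiv_lt_0_compat; auto.
    intros y Hy. replace (y - 0) with y in Hy by ring.
    assert (phi c u 0 = 0) by (unfold phi; destruct Rle_dec; lra). rewrite H, Rminus_0_r.
    unfold phi. destruct Rle_dec. rewrite Rabs_R0; auto.
    assert (Hy0 : 0 < y) by lra.
    assert (Hy1 : y < 1) by (apply Rle_lt_trans with (Rabs y); [apply Rle_abs|]; eapply Rlt_le_trans; [exact Hy|apply Rmin_l]).
    assert (Hy2 : y < eps ^ k / M) by (apply Rle_lt_trans with (Rabs y); [apply Rle_abs|]; eapply Rlt_le_trans; [exact Hy|apply Rmin_r]).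
    rewrite Rabs_pos_eq by (left; apply Rpower_pos).
    apply Rpower_small; auto. split.
    { apply Rdiv_lt_0_compat. apply G_pos; auto. apply pow_lt; auto. }
    assert (Hpk : 0 < y ^ (n - k)) by (apply pow_lt; auto).
    apply Rle_lt_trans with (M * y ^ n / y ^ (n - k)).
    { unfold Rdiv. apply Rmult_le_compat_r. left; apply Rinv_0_lt_compat; auto. apply HG. lra. }
    replace (M * y ^ n / y ^ (n - k)) with (M * y ^ k).
    2:{ replace n with ((n - k) + k)%nat at 1 by lia. rewrite pow_add. field. lra. }
    apply Rle_lt_trans with (M * y).
    { apply Rmult_le_compat_l. lra. replace k with (S (k - 1)) by lia. simpl.
      apply Rle_trans with (y * 1); [|lra]. apply Rmult_le_compat_l. lra.
      rewrite <- (pow1 (k - 1)). apply pow_incr. lra. }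
    apply Rmult_lt_reg_r with (/ M). apply Rinv_0_lt_compat; auto.
    replace (M * y * / M) with y by (field; lra). exact Hy2.
  - apply cont_local with (fun s => Rpower (Qf c u s) (/ INR k)) s. auto.
    intros y Hy. apply phi_pos_eq. revert Hy. unfold Rabs; destruct Rcase_abs; lra.
    apply (continuity_pt_comp (Qf c u) (fun z => Rpower z (/ INR k))).
    apply Q_cont; auto. apply Rpower_cont_base. apply Q_pos; auto.
Qed.


Lemma phi_ge0 c u s : 0 <= phi c u s.
Proof. unfold phi. destruct Rle_dec. lra. left; apply Rpower_pos. Qed.

Lemma phi_pos c u s : 0 < s -> 0 < phi c u s.
Proof. intros. rewrite phi_pos_eq; auto. apply Rpower_pos. Qed.

Lemma phi_0 c u : phi c u 0 = 0.
Proof. unfold phi. destruct Rle_dec; lra. Qed.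

Lemma phi_pow c u s : 0 < c -> Good u -> 0 < s -> phi c u s ^ k * s ^ (n - k) = Gq c u s.
Proof.
  intros Hc Hu Hs. rewrite phi_pos_eq by auto. rewrite Rpower_pow_inv; auto.
  unfold Qf. field. apply pow_nonzero; lra. apply Q_pos; auto.
Qed.

Lemma F_mono u v t : Good u -> Good v -> (forall x, Icc x -> u x <= v x) -> 0 <= t -> Fq v t <= Fq u t.
Proof.
  intros Hu Hv Huv Ht. unfold Fq. apply Rmult_le_compat_l. apply pow_le; auto.
  apply Rle_Rpower_l. left; apply q_pos. split.
  pose proof (base_ge1 v t Hv); lra. pose proof (Huv _ (clamp_in t)); lra.
Qed.

Lemma G_mono c c' u v s : 0 < c' <= c -> Good u -> Good v -> (forall x, Icc x -> u x <= v x) -> 0 <= s ->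
  Gq c' v s <= Gq c u s.
Proof.
  intros Hc Hu Hv Huv Hs. unfold Gq.
  assert (H1 : RInt (Fq v) 0 s <= RInt (Fq u) 0 s).
  { apply RInt_le; auto; try apply F_exRInt; auto. intros x Hx. apply F_mono; auto. lra. }
  assert (H0 : 0 <= RInt (Fq v) 0 s).
  { apply RInt_ge_0; auto. apply F_exRInt; auto. intros x Hx. left; apply F_pos. lra. }
  nra.
Qed.

Lemma phi_mono c c' u v s : 0 < c' <= c -> Good u -> Good v -> (forall x, Icc x -> u x <= v x) -> 0 <= s ->
  phi c' v s <= phi c u s.
Proof.
  intros Hc Hu Hv Huv Hs. destruct (Req_dec s 0) as [->|Hs0].
  { rewrite !phi_0; lra. }
  rewrite !phi_pos_eq by lra. apply Rle_Rpower_l.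
  left; apply Rinv_0_lt_compat, lt_0_INR; lia.
  split. apply Q_pos; auto; lra. unfold Qf. unfold Rdiv. apply Rmult_le_compat_r.
  left; apply Rinv_0_lt_compat, pow_lt; lra. apply G_mono; auto.
Qed.

Lemma phi_exRInt c u a b : 0 < c -> Good u -> ex_RInt (phi c u) a b.
Proof. intros Hc Hu. apply (ex_RInt_continuous (V:=R_CompleteNormedModule)).
  intros z _. apply cont_to_continuous, phi_cont; auto. Qed.

Lemma T_deriv c u r : 0 < c -> Good u -> derivable_pt_lim (Tq c u) r (phi c u r).
Proof.
  intros Hc Hu. rewrite <- (Ropp_involutive (phi c u r)).
  apply (derivable_pt_lim_opp (fun r => RInt (phi c u) r 1)).
  apply is_derive_Reals. apply (is_derive_RInt' (phi c u) (fun r => RInt (phi c u) r 1) r 1).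
  - apply filter_forall. intros b. apply (RInt_correct (V:=R_CompleteNormedModule)). apply phi_exRInt; auto.
  - apply cont_to_continuous, phi_cont; auto.
Qed.

Lemma T_cont c u r : 0 < c -> Good u -> continuity_pt (Tq c u) r.
Proof. intros. eapply deriv_cont_pt. apply T_deriv; auto. Qed.

Lemma T_1 c u : Tq c u 1 = 0.
Proof. unfold Tq. rewrite RInt_point. unfold zero; simpl. ring. Qed.

Lemma T_le0 c u r : 0 < c -> Good u -> r <= 1 -> Tq c u r <= 0.
Proof.
  intros Hc Hu Hr. unfold Tq. cut (0 <= RInt (phi c u) r 1). lra.
  apply RInt_ge_0; auto. apply phi_exRInt; auto. intros; apply phi_ge0.
Qed.

Lemma T_lt0 c u r : 0 < c -> Good u -> 0 <= r < 1 -> Tq c u r < 0.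
Proof.
  intros Hc Hu Hr. unfold Tq. cut (0 < RInt (phi c u) r 1). lra.
  apply RInt_gt_0. lra. intros x Hx. apply phi_pos. lra.
  intros x _. apply cont_to_continuous, phi_cont; auto.
Qed.

Lemma T_good c u : 0 < c -> Good u -> Good (Tq c u).
Proof.
  intros Hc Hu. split.
  - intros x. apply cont_clamp_comp. apply T_cont; auto.
  - intros x Hx. apply T_le0; auto. apply Hx.
Qed.

Lemma T_mono c c' u v r : 0 < c' <= c -> Good u -> Good v -> (forall x, Icc x -> u x <= v x) -> Icc r ->
  Tq c u r <= Tq c' v r.
Proof.
  intros Hc Hu Hv Huv Hr. unfold Tq. apply Ropp_le_contravar.
  unfold Icc in Hr. apply RInt_le. lra. apply phi_exRInt; auto; lra. apply phi_exRInt; auto; lra.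
  intros x Hx. apply phi_mono; auto. lra.
Qed.

Lemma T_lip c u L x y : 0 < c -> Good u -> (forall s, Icc s -> phi c u s <= L) -> Icc x -> Icc y ->
  Rabs (Tq c u x - Tq c u y) <= L * Rabs (x - y).
Proof.
  intros Hc Hu HL Hx Hy. destruct (MVT_abs (Tq c u) (phi c u) y x) as [z [Hz Hzr]].
  { intros; apply T_deriv; auto. }
  rewrite Hz. apply Rmult_le_compat_r. apply Rabs_pos.
  rewrite Rabs_pos_eq by apply phi_ge0. apply HL.
  unfold Icc in *. split.
  - apply Rle_trans with (Rmin y x). apply Rmin_glb; lra. lra.
  - apply Rle_trans with (Rmax y x). lra. apply Rmax_lub; lra.
Qed.


Lemma cnk_pos : 0 < cnk n k.
Proof.
  unfold cnk, Binomial.C. apply Rdiv_lt_0_compat.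
  apply Rdiv_lt_0_compat. apply INR_fact_lt_0.
  apply Rmult_lt_0_compat; apply INR_fact_lt_0. apply lt_0_INR. lia.
Qed.

Lemma pow_clamp_cont m x : continuity_pt (fun t => clamp t ^ m) x.
Proof. apply (cont_clamp_comp (fun z => z ^ m)). apply derivable_continuous_pt, derivable_pt_pow. Qed.

Lemma sub_props lam v : 0 < lam -> is_subsolution n k q lam v ->
  Good v /\ forall r, Icc r -> v r <= Tq (lam / cnk n k) v r.
Proof.
  intros Hlam [v1 [[Hd _] [Hadm [Hv1 Heq]]]].
  pose proof cnk_pos as Hcnk.
  set (c := lam / cnk n k).
  assert (Hc : 0 < c) by (apply Rdiv_lt_0_compat; auto).
  assert (Cv : forall x, continuity_pt (fun t => v (clamp t)) x).
  { apply cont_within_clamp. intros x Hx. eapply deriv_within_cont. apply (Hd x Hx). }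
  assert (Cv1 : forall x, continuity_pt (fun t => v1 (clamp t)) x).
  { apply cont_within_clamp. intros x Hx. apply (Hd x Hx). }
  assert (Dv : forall x, Ioo x -> derivable_pt_lim v x (v1 x)).
  { intros x Hx. apply deriv_within_interior; auto. apply Hd. unfold Ioo, Icc in *; lra. }
  assert (Hpos : forall r, 0 < r <= 1 -> 0 <= v1 r).
  { intros r Hr.
    assert (H : 0 ^ (n - 1) * v1 0 <= r ^ (n - 1) * v1 r).
    { apply (mono_01 (fun s => s ^ (n - 1) * v1 s) 0 r); try lra.
      - intros x Hx. destruct (Hadm 1%nat ltac:(lia) x ltac:(unfold Ioo; lra)) as [d [Hd1 Hd2]].
        exists d. split; auto. apply deriv_local with (fun s => s ^ (n - 1) * v1 s ^ 1) 1. lra.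
        intros y _. rewrite pow_1. reflexivity. exact Hd1.
      - apply (continuity_pt_mult (fun t => clamp t ^ (n - 1)) (fun t => v1 (clamp t))).
        apply pow_clamp_cont. apply Cv1.
      - apply (continuity_pt_mult (fun t => clamp t ^ (n - 1)) (fun t => v1 (clamp t))).
        apply pow_clamp_cont. apply Cv1. }
    rewrite pow_i in H by lia. rewrite Rmult_0_l in H.
    assert (0 < r ^ (n - 1)) by (apply pow_lt; lra). nra. }
  assert (Hneg : forall r, Icc r -> v r <= 0).
  { intros r Hr. unfold Icc in Hr. destruct (Req_dec r 1) as [->|Hr1]; auto.
    apply Rle_trans with (v 1); auto. apply mono_01; try lra; auto.
    intros x Hx. exists (v1 x). split. apply Dv. unfold Ioo; lra. apply Hpos. lra. }
  assert (Gv : Good v) by (split; auto).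
  split; auto.
  assert (HD : forall r, 0 < r <= 1 -> Gq c v r <= r ^ (n - k) * v1 r ^ k).
  { intros r Hr.
    set (D := fun s => s ^ (n - k) * v1 s ^ k - Gq c v s).
    assert (HDc : forall x, continuity_pt (fun t => D (clamp t)) x).
    { intros x. unfold D.
      apply (continuity_pt_minus (fun t => clamp t ^ (n - k) * v1 (clamp t) ^ k) (fun t => Gq c v (clamp t))).
      apply (continuity_pt_mult (fun t => clamp t ^ (n - k)) (fun t => v1 (clamp t) ^ k)).
      apply pow_clamp_cont.
      apply (continuity_pt_comp (fun t => v1 (clamp t)) (fun z => z ^ k)). apply Cv1.
      apply derivable_continuous_pt, derivable_pt_pow.
      apply cont_clamp_comp. apply G_cont; auto. }
    assert (D 0 <= D r).
    { apply mono_01; try lra; auto.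
      intros x Hx. destruct (Heq x ltac:(unfold Ioo; lra)) as [d [Hd1 Hd2]].
      exists (d - c * Fq v x). split.
      - apply (derivable_pt_lim_minus (fun s => s ^ (n - k) * v1 s ^ k) (Gq c v)); auto.
        apply G_deriv; auto.
      - unfold Fq. rewrite clamp_Icc by (unfold Icc; lra).
        assert (Hx1 : 0 < x ^ (n - 1)) by (apply pow_lt; lra).
        set (P := Rpower (1 - v x) q) in *.
        assert (d >= lam * P * x ^ (n - 1) / cnk n k).
        { apply Rle_ge. apply Rge_le in Hd2.
          apply Rmult_le_reg_r with (cnk n k / x ^ (n - 1)).
          apply Rdiv_lt_0_compat; auto.
          replace (lam * P * x ^ (n - 1) / cnk n k * (cnk n k / x ^ (n - 1))) with (lam * P) by (field; lra).
          replace (d * (cnk n k / x ^ (n - 1))) with (cnk n k * d / x ^ (n - 1)) by (field; lra). exact Hd2. }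
        unfold c. replace (lam / cnk n k * (x ^ (n - 1) * P)) with (lam * P * x ^ (n - 1) / cnk n k) by (field; lra).
        lra. }
    unfold D in H. rewrite G_0, pow_i in H by lia. lra. }
  assert (Hphi : forall r, 0 < r <= 1 -> phi c v r <= v1 r).
  { intros r Hr. apply (pow_inj_le (v1 r) (phi c v r) k hk). apply Hpos; auto. apply phi_ge0.
    assert (Hrk : 0 < r ^ (n - k)) by (apply pow_lt; lra).
    apply Rmult_le_reg_r with (r ^ (n - k)); auto.
    rewrite phi_pow; auto. rewrite Rmult_comm. apply HD; auto. lra. }
  intros r Hr. unfold Icc in Hr. destruct (Req_dec r 1) as [->|Hr1].
  { rewrite T_1. auto. }
  assert (v r - Tq c v r <= v 1 - Tq c v 1).
  { apply (mono_01 (fun s => v s - Tq c v s)); try lra.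
    - intros x Hx. exists (v1 x - phi c v x). split.
      apply (derivable_pt_lim_minus v (Tq c v)). apply Dv. unfold Ioo; lra. apply T_deriv; auto.
      pose proof (Hphi x ltac:(lra)). lra.
    - apply (continuity_pt_minus (fun t => v (clamp t)) (fun t => Tq c v (clamp t))). apply Cv.
      apply cont_clamp_comp. apply T_cont; auto.
    - apply (continuity_pt_minus (fun t => v (clamp t)) (fun t => Tq c v (clamp t))). apply Cv.
      apply cont_clamp_comp. apply T_cont; auto. }
  rewrite T_1 in H. lra.
Qed.


Definition dQ c u s := (c * Fq u s * s ^ (n - k) - INR (n - k) * s ^ Init.Nat.pred (n - k) * Gq c u s) / (s ^ (n - k))².
Definition phi' c u s := / INR k * Rpower (Qf c u s) (/ INR k - 1) * dQ c u s.

Lemma Q_deriv c u s : Good u -> 0 < s -> derivable_pt_lim (Qf c u) s (dQ c u s).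
Proof.
  intros Hu Hs. unfold dQ.
  apply (derivable_pt_lim_div (Gq c u) (fun s => s ^ (n - k))).
  apply G_deriv; auto. apply derivable_pt_lim_pow. apply pow_nonzero; lra.
Qed.

Lemma phi_deriv c u s : 0 < c -> Good u -> 0 < s -> derivable_pt_lim (phi c u) s (phi' c u s).
Proof.
  intros Hc Hu Hs. apply deriv_local with (fun s => Rpower (Qf c u s) (/ INR k)) s; auto.
  { intros y Hy. apply phi_pos_eq. revert Hy. unfold Rabs; destruct Rcase_abs; lra. }
  unfold phi'. apply (derivable_pt_lim_comp (Qf c u) (fun z => Rpower z (/ INR k))).
  apply Q_deriv; auto. apply derivable_pt_lim_power. apply Q_pos; auto.
Qed.

Lemma phi'_cont c u s : 0 < c -> Good u -> 0 < s -> continuity_pt (phi' c u) s.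
Proof.
  intros Hc Hu Hs. unfold phi'.
  apply (continuity_pt_mult (fun s => / INR k * Rpower (Qf c u s) (/ INR k - 1)) (dQ c u)).
  - apply (continuity_pt_scal (fun s => Rpower (Qf c u s) (/ INR k - 1))).
    apply (continuity_pt_comp (Qf c u) (fun z => Rpower z (/ INR k - 1))).
    apply Q_cont; auto. apply Rpower_cont_base, Q_pos; auto.
  - unfold dQ.
    apply (continuity_pt_div (fun s => c * Fq u s * s ^ (n - k) - INR (n - k) * s ^ Init.Nat.pred (n - k) * Gq c u s)
             (fun s => (s ^ (n - k))²)).
    + apply (continuity_pt_minus (fun s => c * Fq u s * s ^ (n - k)) (fun s => INR (n - k) * s ^ Init.Nat.pred (n - k) * Gq c u s)).
      * apply (continuity_pt_mult (fun s => c * Fq u s) (fun s => s ^ (n - k))).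
        apply (continuity_pt_scal (Fq u)). apply F_cont; auto.
        apply derivable_continuous_pt, derivable_pt_pow.
      * apply (continuity_pt_mult (fun s => INR (n - k) * s ^ Init.Nat.pred (n - k)) (Gq c u)).
        apply (continuity_pt_scal (fun s => s ^ Init.Nat.pred (n - k))).
        apply derivable_continuous_pt, derivable_pt_pow. apply G_cont; auto.
    + unfold Rsqr. apply (continuity_pt_mult (fun s => s ^ (n - k)) (fun s => s ^ (n - k)));
      apply derivable_continuous_pt, derivable_pt_pow.
    + unfold Rsqr. apply Rmult_integral_contrapositive. split; apply pow_nonzero; lra.
Qed.

Lemma exp_pow_lem a m : exp a ^ m = exp (INR m * a).
Proof. rewrite <- Rpower_pow by apply exp_pos. unfold Rpower. rewrite ln_exp. reflexivity. Qed.

Lemma pow_exp_ln s m : 0 < s -> s ^ m = exp (INR m * ln s).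
Proof. intros Hs. rewrite <- Rpower_pow by auto. reflexivity. Qed.

Lemma adm_identity c u i s : 0 < c -> Good u -> 0 < s ->
  s ^ (n - i) * phi c u s ^ i =
  Rpower (Gq c u s) (INR i / INR k) * Rpower s (INR (n - i) - INR i / INR k * INR (n - k)).
Proof.
  intros Hc Hu Hs. rewrite phi_pos_eq by auto.
  assert (HG : 0 < Gq c u s) by (apply G_pos; auto).
  assert (Hk : INR k <> 0) by (apply not_0_INR; lia).
  unfold Rpower. rewrite exp_pow_lem, pow_exp_ln by auto. rewrite <- !exp_plus. f_equal.
  unfold Qf. unfold Rdiv at 1. rewrite ln_mult, ln_Rinv, ln_pow; auto.
  field; auto. apply pow_lt; auto. apply Rinv_0_lt_compat, pow_lt; auto.
Qed.

Lemma adm_sol c u : 0 < c -> Good u -> admissible n k (phi c u).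
Proof.
  intros Hc Hu i Hi r Hr. unfold Ioo in Hr.
  set (e := INR (n - i) - INR i / INR k * INR (n - k)).
  assert (Hk : 0 < INR k) by (apply lt_0_INR; lia).
  assert (He : 0 <= e).
  { unfold e. rewrite !minus_INR by lia.
    assert (INR i <= INR k) by (apply le_INR; lia).
    assert (0 <= INR n) by apply pos_INR.
    assert (E : INR n - INR i - INR i / INR k * (INR n - INR k) = INR n * (INR k - INR i) / INR k) by (field; lra).
    rewrite E. apply Rdiv_le_0_compat; auto. apply Rmult_le_pos; lra. }
  assert (Hik : 0 <= INR i / INR k) by (apply Rdiv_le_0_compat; auto; apply pos_INR).
  assert (HG : 0 < Gq c u r) by (apply G_pos; auto; lra).
  exists ((INR i / INR k * Rpower (Gq c u r) (INR i / INR k - 1) * (c * Fq u r)) * Rpower r e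
          + Rpower (Gq c u r) (INR i / INR k) * (e * Rpower r (e - 1))).
  split.
  - apply deriv_local with (fun s => Rpower (Gq c u s) (INR i / INR k) * Rpower s e) r. lra.
    { intros y Hy. apply adm_identity; auto. revert Hy. unfold Rabs; destruct Rcase_abs; lra. }
    apply (derivable_pt_lim_mult (fun s => Rpower (Gq c u s) (INR i / INR k)) (fun s => Rpower s e)).
    + apply (derivable_pt_lim_comp (Gq c u) (fun z => Rpower z (INR i / INR k))).
      apply G_deriv; auto. apply derivable_pt_lim_power; auto.
    + apply derivable_pt_lim_power. lra.
  - assert (0 < Fq u r) by (apply F_pos; lra).
    pose proof (Rpower_pos (Gq c u r) (INR i / INR k - 1)).
    pose proof (Rpower_pos (Gq c u r) (INR i / INR k)).
    pose proof (Rpower_pos r e). pose proof (Rpower_pos r (e - 1)).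
    set (ik := INR i / INR k) in *. set (P1 := Rpower (Gq c u r) (ik - 1)) in *.
    set (P2 := Rpower (Gq c u r) ik) in *. set (P3 := Rpower r e) in *. set (P4 := Rpower r (e - 1)) in *.
    set (F := Fq u r) in *.
    assert (0 <= ik * P1 * (c * F) * P3).
    { apply Rmult_le_pos; [|lra]. apply Rmult_le_pos; [|nra]. nra. }
    apply Rplus_le_le_0_compat; auto. apply Rmult_le_pos; [lra| apply Rmult_le_pos; lra].
Qed.

Lemma deriv_lim_within D f x l : derivable_pt_lim f x l -> deriv_within D f x l.
Proof.
  intros H eps He. destruct (H eps He) as [d Hd]. exists d. split. apply cond_pos.
  intros y _ Hyx Hy. specialize (Hd (y - x)). replace (x + (y - x)) with y in Hd by ring.
  apply Hd; auto. lra.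
Qed.

Lemma cont_pt_within D f x : continuity_pt f x -> cont_within D f x.
Proof.
  intros H eps He. destruct (cont_pt_elim f x H eps He) as [d [Hd Hy]]. exists d. split; auto.
Qed.

Lemma sol_of_fix lam U : 0 < lam -> Good U ->
  (forall x, Icc x -> U x = Tq (lam / cnk n k) U x) ->
  is_solution n k q lam (Tq (lam / cnk n k) U).
Proof.
  intros Hlam HU Hfix. pose proof cnk_pos as Hcnk.
  set (c := lam / cnk n k) in *.
  assert (Hc : 0 < c) by (apply Rdiv_lt_0_compat; auto).
  exists (phi c U). split; [|split; [|split; [|split; [|split]]]].
  - split.
    + intros r Hr. split. apply deriv_lim_within, T_deriv; auto.
      apply cont_pt_within, phi_cont; auto.
    + exists (phi' c U). intros r Hr. unfold Ioo in Hr. split.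
      apply phi_deriv; auto; lra. apply phi'_cont; auto; lra.
  - apply adm_sol; auto.
  - apply phi_0.
  - apply T_1.
  - intros r Hr. apply T_lt0; auto. unfold Ioo in Hr; lra.
  - intros r Hr. unfold Ioo in Hr. exists (c * Fq U r). split.
    + apply deriv_local with (Gq c U) r. lra.
      { intros y Hy. rewrite <- phi_pow; auto. ring. revert Hy. unfold Rabs; destruct Rcase_abs; lra. }
      apply G_deriv; auto.
    + unfold Fq. rewrite clamp_Icc by (unfold Icc; lra). rewrite <- Hfix by (unfold Icc; lra).
      unfold c. field. split; [lra | apply pow_nonzero; lra].
Qed.


Lemma sol_sub l w : is_solution n k q l w -> is_subsolution n k q l w.
Proof.
  intros [u1 [H1 [H2 [H3 [H4 [H5 H6]]]]]]. exists u1. split; auto. split; auto. split. lra.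
  intros r Hr. destruct (H6 r Hr) as [d [Hd Heq]]. exists d. split; auto. lra.
Qed.

Lemma exist_max lam0 lam w : 0 < lam < lam0 -> is_solution n k q lam0 w ->
  exists u, is_maximal n k q lam u /\ bounded01 u.
Proof.
  intros Hl Hw. pose proof cnk_pos as Hcnk.
  set (c0 := lam0 / cnk n k). set (c := lam / cnk n k).
  assert (Hc : 0 < c) by (apply Rdiv_lt_0_compat; lra).
  assert (Hcc : c <= c0) by (unfold c, c0, Rdiv; apply Rmult_le_compat_r; [left; apply Rinv_0_lt_compat|]; lra).
  destruct (sub_props lam0 w ltac:(lra) (sol_sub _ _ Hw)) as [Gw Hw0].
  fold c0 in Hw0.
  assert (Ec : c = lam / cnk n k) by reflexivity. clearbody c c0.
  assert (Hwc : forall x, Icc x -> w x <= Tq c w x).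
  { intros x Hx. apply Rle_trans with (Tq c0 w x); auto. apply T_mono; auto; try lra; intros; lra. }
  set (Kset := fun u => Good u /\ (forall x, Icc x -> w x <= u x) /\ (forall x, Icc x -> u x <= Tq c u x)).
  assert (KT : forall u, Kset u -> Kset (Tq c u)).
  { intros u [Gu [Hwu Hut]]. split; [|split].
    - apply T_good; auto.
    - intros x Hx. apply Rle_trans with (Tq c w x); auto. apply T_mono; auto; lra.
    - intros x Hx. apply T_mono; auto. lra. apply T_good; auto. }
  assert (Kw : Kset w) by (split; [|split]; auto; intros; lra).
  set (E := fun x y => exists u, Kset u /\ y = u (clamp x)).
  assert (HE : forall x, {m | is_lub (E x) m}).
  { intros x. apply completeness.
    - exists 0. intros y [u [[[_ Hu] _] ->]]. apply Hu, clamp_in.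
    - exists (w (clamp x)). exists w. split; auto. }
  set (U := fun x => proj1_sig (HE x)).
  assert (HUl : forall x, is_lub (E x) (U x)) by (intros x; apply (proj2_sig (HE x))).
  assert (Up : forall u x, Kset u -> Icc x -> u x <= U x).
  { intros u x Ku Hx. destruct (HUl x) as [Hub _]. apply Hub. exists u. split; auto.
    rewrite clamp_Icc; auto. }
  assert (Lst : forall x M, Icc x -> (forall u, Kset u -> u x <= M) -> U x <= M).
  { intros x M Hx HM. destruct (HUl x) as [_ Hl']. apply Hl'. intros y [u [Ku ->]].
    rewrite clamp_Icc; auto. }
  destruct (continuity_ab_maj (phi c w) 0 1) as [Mx [HMx _]]. lra.
  intros t _. apply phi_cont; auto.
  set (L := phi c w Mx).
  assert (HL0 : 0 <= L) by apply phi_ge0.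
  assert (HLu : forall u s, Kset u -> Icc s -> phi c u s <= L).
  { intros u s [Gu [Hwu _]] Hs. apply Rle_trans with (phi c w s). apply phi_mono; auto. lra. apply Hs.
    apply HMx, Hs. }
  clearbody L U E.
  assert (Ulip : forall x y, Icc x -> Icc y -> U x <= U y + L * Rabs (x - y)).
  { intros x y Hx Hy. apply Lst; auto. intros u Ku. pose proof Ku as [Gu [Hwu Hut]].
    apply Rle_trans with (Tq c u x); auto.
    assert (Tq c u x - Tq c u y <= L * Rabs (x - y)).
    { eapply Rle_trans. apply Rle_abs. apply T_lip; auto; intros s Hs; apply HLu; auto. }
    assert (Tq c u y <= U y) by (apply (Up (Tq c u)); [apply KT; exact Ku | exact Hy]). lra. }
  assert (GU : Good U).
  { split.
    - intros x. apply cont_pt_intro. intros eps He. exists (eps / (L + 1)). split.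
      apply Rdiv_lt_0_compat; lra. intros y Hy.
      assert (Rabs (U (clamp y) - U (clamp x)) <= L * Rabs (y - x)).
      { pose proof (Ulip (clamp y) (clamp x) (clamp_in y) (clamp_in x)).
        pose proof (Ulip (clamp x) (clamp y) (clamp_in x) (clamp_in y)).
        rewrite Rabs_minus_sym in H0. pose proof (clamp_lip y x).
        assert (L * Rabs (clamp y - clamp x) <= L * Rabs (y - x)) by (apply Rmult_le_compat_l; auto).
        unfold Rabs at 1. destruct Rcase_abs; lra. }
      apply Rle_lt_trans with (L * Rabs (y - x)); auto.
      apply Rle_lt_trans with ((L + 1) * Rabs (y - x)). pose proof (Rabs_pos (y - x)). nra.
      apply Rmult_lt_reg_l with (/ (L + 1)). apply Rinv_0_lt_compat; lra.
      rewrite <- Rmult_assoc, Rinv_l, Rmult_1_l by lra. unfold Rdiv in Hy. lra.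
    - intros x Hx. apply Lst; auto. intros u [[_ Hu] _]. apply Hu; auto. }
  assert (KU : Kset U).
  { split; [exact GU|split].
    - intros x Hx. apply (Up w); auto.
    - intros x Hx. apply Lst; auto. intros u Ku. pose proof Ku as [Gu [Hwu Hut]].
      apply Rle_trans with (Tq c u x); auto. apply T_mono; auto; try lra. }
  assert (Hfix : forall x, Icc x -> U x = Tq c U x).
  { intros x Hx. apply Rle_antisym. apply (proj2 (proj2 KU)); auto. apply (Up (Tq c U)); [apply KT; exact KU | exact Hx]. }
  exists (Tq c U). split; [split|].
  - rewrite Ec. apply sol_of_fix; auto. lra. rewrite <- Ec; auto.
  - intros v Hv r Hr. destruct (sub_props lam v ltac:(lra) Hv) as [Gv Hvt]. rewrite <- Ec in Hvt.
    set (m := fun x => Rmax (v x) (U x)).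
    assert (Gm : Good m).
    { split.
      - intros x. apply (cont_Rmax (fun t => v (clamp t)) (fun t => U (clamp t))). apply Gv. apply GU.
      - intros x Hx. apply Rmax_lub. apply Gv; auto. apply GU; auto. }
    assert (Hvm : forall x, Icc x -> v x <= m x) by (intros; apply Rmax_l).
    assert (HUm : forall x, Icc x -> U x <= m x) by (intros; apply Rmax_r).
    assert (Km : Kset m).
    { split; [exact Gm|split].
      - intros x Hx. apply Rle_trans with (U x). apply (proj1 (proj2 KU)); exact Hx. apply HUm; exact Hx.
      - intros x Hx. apply Rmax_lub.
        + apply Rle_trans with (Tq c v x). apply Hvt; exact Hx.
          apply T_mono; try exact Gv; try exact Gm; try exact Hvm; try exact Hx; lra.
        + rewrite (Hfix x Hx). apply T_mono; try exact GU; try exact Gm; try exact HUm; try exact Hx; lra. }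
    rewrite <- (Hfix r Hr). apply Rle_trans with (m r). apply Hvm; exact Hr. apply (Up m); [exact Km|exact Hr].
  - exists L. intros r Hr. replace (Tq c U r) with (Tq c U r - Tq c U 1) by (rewrite T_1; ring).
    eapply Rle_trans. apply T_lip; try exact Hc; try exact GU; try exact Hr.
    intros s Hs; apply HLu; [exact KU|exact Hs]. unfold Icc; lra.
    unfold Icc in Hr. rewrite Rabs_left1 by lra. replace (- (r - 1)) with (1 - r) by ring.
    assert (L * (1 - r) <= L * 1) by (apply Rmult_le_compat_l; lra). lra.
Qed.

End Op.

Lemma sol_sub_lt n k q l1 l2 u : 0 < l1 <= l2 -> is_solution n k q l2 u -> is_subsolution n k q l1 u.
Proof.
  intros Hl [u1 [H1 [H2 [H3 [H4 [H5 H6]]]]]]. exists u1. split; auto. split; auto. split. lra.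
  intros r Hr. destruct (H6 r Hr) as [d [Hd Heq]]. exists d. split; auto. rewrite Heq.
  apply Rle_ge. apply Rmult_le_compat_r. left; apply Rpower_pos. lra.
Qed.

Theorem lemma2 (n k : nat) (q lam0 : R) :
  (1 <= k)%nat -> (2 * k < n)%nat -> INR k < q -> 0 < lam0 ->
  (exists w, is_solution n k q lam0 w) ->
  (forall lam, 0 < lam < lam0 ->
     exists u, is_maximal n k q lam u /\ bounded01 u) /\
  (forall l1 l2 (u1 u2 : R -> R), 0 < l1 -> l1 < l2 -> l2 < lam0 ->
     is_maximal n k q l1 u1 -> is_maximal n k q l2 u2 ->
     forall r, Icc r -> u2 r <= u1 r).
Proof.
  intros hk hn hq Hl0 [w Hw]. split.
  - intros lam Hlam. exact (exist_max n k q hk hn hq lam0 lam w Hlam Hw).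
  - intros l1 l2 u1 u2 H1 H12 H2 [Hs1 Hm1] [Hs2 Hm2] r Hr.
    apply Hm1; auto. apply sol_sub_lt with l2; auto. lra.
Qed.
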